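(* Let $R$ be a commutative domain with unit and let $f\in R$ be a nonzero non-invertible element. Let $S=R[u,v]/(uv-f)$, where $R[u,v]$ is the polynomial ring in two variables over $R$. Then $S$ is a unique factorization domain if and only if $R$ is a unique factorization domain and $f$ is a prime element of $R$. *)

(* Defs.v *)
From HB Require Import structures.
From mathcomp Require Import all_boot all_order all_algebra.
From mathcomp Require Import boolp.
Set Implicit Arguments. Unset Strict Implicit. Unset Printing Implicit Defensive.
Import Order.TTheory GRing.Theory.
Local Open Scope ring_scope.

Section Divisibility.
Variable A : comNzRingType.

Definition rdvd (a b : A) : Prop := exists c, b = a * c.
Definition runit (a : A) : Prop := rdvd a 1.
Definition rassoc (a b : A) : Prop := exists w, runit w /\ b = a * w.

Definition rirreducible (a : A) : Prop :=
  [/\ a != 0, ~ runit a & forall b c, a = b * c -> runit b \/ runit c].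

Definition rprime (a : A) : Prop :=
  [/\ a != 0, ~ runit a & forall b c, rdvd a (b * c) -> rdvd a b \/ rdvd a c].

(* integral domain (1 != 0 is built into comNzRingType) *)
Definition is_domain : Prop := forall a b : A, a * b = 0 -> a = 0 \/ b = 0.

Definition UFD : Prop :=
  [/\ is_domain,
      (forall a : A, a != 0 -> ~ runit a ->
         exists s : seq A, [/\ s != [::], (forall x, x \in s -> rirreducible x)
                              & a = \prod_(x <- s) x])
    & (forall s t : seq A,
         (forall x, x \in s -> rirreducible x) ->
         (forall x, x \in t -> rirreducible x) ->
         \prod_(x <- s) x = \prod_(x <- t) x ->
         size s = size t /\
         exists2 t' : seq A, perm_eq t t' &
           forall i, (i < size s)%N -> rassoc (nth 0 s i) (nth 0 t' i))].
End Divisibility.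

Section UVQuotient.
Variable R : idomainType.

(* R[u,v] is {poly {poly R}}: u is the inner variable, v the outer one *)
Definition var_u : {poly {poly R}} := ('X)%:P.
Definition var_v : {poly {poly R}} := 'X.
Definition uv_f (f : R) : {poly {poly R}} := var_u * var_v - (f%:P)%:P.

(* the principal ideal (uv - f); the (unused) non-unit hypothesis on f only
   serves to make the quotient a nontrivial ring *)
Definition uvf_ideal (f : R) (hf : f \isn't a GRing.unit) : {poly {poly R}} -> bool :=
  fun p => `[< exists q, p = q * uv_f f >].

Lemma uvf_ideal_closed (f : R) (hf : f \isn't a GRing.unit) :
  idealr_closed (uvf_ideal hf).
Proof.
split.
- by apply/asboolP; exists 0; rewrite mul0r.
- apply/negP => /asboolP [q hq].
  have := congr1 (fun p : {poly {poly R}} => p.[0].[0]) hq.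
  rewrite /= hornerM /uv_f /var_u /var_v !hornerE /=.
  idtac.
  move=> h; move/negP: hf; apply; apply/unitrPr; exists (- (q.[0]).[0]).
  by rewrite h !mulrN mulrC.
- move=> a p1 p2 /asboolP [q1 ->] /asboolP [q2 ->].
  by apply/asboolP; exists (a * q1 + q2); rewrite mulrDl mulrA.
Qed.

HB.instance Definition _ (f : R) (hf : f \isn't a GRing.unit) :=
  isIdealr.Build {poly {poly R}} (uvf_ideal hf) (uvf_ideal_closed hf).

Definition uvf_idealr (f : R) (hf : f \isn't a GRing.unit) : idealr {poly {poly R}} :=
  uvf_ideal hf.
Definition S_uv (f : R) (hf : f \isn't a GRing.unit) : comNzRingType :=
  {ideal_quot (uvf_idealr hf)}.
End UVQuotient.

(* Main.v *)
Require Import Defs.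
From HB Require Import structures.
From mathcomp Require Import all_boot all_order all_algebra.
Local Open Scope ring_scope.
From mathcomp Require Import boolp generic_quotient ring_quotient zify ring.

Module Dev.
Set Implicit Arguments. Unset Strict Implicit. Unset Printing Implicit Defensive.
Import GRing.Theory.
Local Open Scope ring_scope.

Section GenDiv.
Variable A : comNzRingType.
Implicit Types a b c d e x y p : A.

Lemma rdvd_refl a : rdvd a a.
Proof. by exists 1; rewrite mulr1. Qed.

Lemma rdvd_trans a b c : rdvd a b -> rdvd b c -> rdvd a c.
Proof. by move=> [x ->] [y ->]; exists (x * y); rewrite mulrA. Qed.

Lemma rdvd_mulr a b c : rdvd a b -> rdvd a (b * c).
Proof. by move=> [x ->]; exists (x * c); rewrite mulrA. Qed.

Lemma rdvd_mull a b c : rdvd a b -> rdvd a (c * b).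
Proof. by rewrite mulrC; apply: rdvd_mulr. Qed.

Lemma rdvd_mul2 a b c d : rdvd a b -> rdvd c d -> rdvd (a * c) (b * d).
Proof. by move=> [x ->] [y ->]; exists (x * y); rewrite mulrACA. Qed.

Lemma rdvd0 a : rdvd a 0.
Proof. by exists 0; rewrite mulr0. Qed.

Lemma rdvdD a b c : rdvd a b -> rdvd a c -> rdvd a (b + c).
Proof. by move=> [x ->] [y ->]; exists (x + y); rewrite mulrDr. Qed.

Lemma rdvdN a b : rdvd a b -> rdvd a (- b).
Proof. by move=> [x ->]; exists (- x); rewrite mulrN. Qed.

Lemma rdvdB a b c : rdvd a b -> rdvd a c -> rdvd a (b - c).
Proof. by move=> h1 h2; apply: rdvdD => //; apply: rdvdN. Qed.

Lemma rdvd_exp a b n : rdvd a b -> rdvd (a ^+ n) (b ^+ n).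
Proof. by move=> [x ->]; exists (x ^+ n); rewrite exprMn. Qed.

Lemma rdvd_expn a m n : (m <= n)%N -> rdvd (a ^+ m) (a ^+ n).
Proof. by move=> h; exists (a ^+ (n - m)); rewrite -exprD subnKC. Qed.

Lemma runit1 : runit (1 : A).
Proof. exact: rdvd_refl. Qed.

Lemma runitM a b : runit a -> runit b -> runit (a * b).
Proof. by move=> [x hx] [y hy]; exists (x * y); rewrite mulrACA -hx -hy mulr1. Qed.

Lemma runitMl a b : runit (a * b) -> runit a.
Proof. by move=> [x hx]; exists (b * x); rewrite mulrA. Qed.

Lemma runitMr a b : runit (a * b) -> runit b.
Proof. by rewrite mulrC; apply: runitMl. Qed.

Lemma runit_dvd a b : runit b -> rdvd a b -> runit a.
Proof. by move=> hb [x hx]; move: hb; rewrite hx; apply: runitMl. Qed.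

Lemma rdvd_unit a b : runit a -> rdvd a b.
Proof. by move=> [x hx]; exists (x * b); rewrite mulrA -hx mul1r. Qed.

Lemma runit_neq0 a : runit a -> a != 0.
Proof. by move=> [x hx]; apply/eqP => a0; move: hx; rewrite a0 mul0r; apply/eqP; apply: oner_neq0. Qed.

Lemma rdvd_mul_unit a b e : runit e -> rdvd a (e * b) -> rdvd a b.
Proof.
move=> [x hx] [y hy]; exists (x * y).
by rewrite mulrCA -hy mulrA (mulrC x) -hx mul1r.
Qed.

Lemma rdvd_unit_mul a b e : runit e -> rdvd a b -> rdvd (a * e) b.
Proof.
move=> [x hx] [y ->]; exists (x * y).
by rewrite -mulrA (mulrA e) -hx mul1r.
Qed.


Lemma rprod_unit (s : seq A) : (forall x, x \in s -> runit x) -> runit (\prod_(x <- s) x).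
Proof.
elim: s => [|x s IH] h; first by rewrite big_nil; apply: runit1.
rewrite big_cons; apply: runitM; first by apply: h; rewrite inE eqxx.
by apply: IH => y hy; apply: h; rewrite inE hy orbT.
Qed.

Lemma rdvd_prod (s : seq A) x : x \in s -> rdvd x (\prod_(y <- s) y).
Proof.
elim: s => [//|y s IH]; rewrite inE big_cons => /orP [/eqP ->|hx].
  by apply: rdvd_mulr; apply: rdvd_refl.
by apply: rdvd_mull; apply: IH.
Qed.

Lemma prod_rem (s : seq A) x : x \in s ->
  \prod_(y <- s) y = x * \prod_(y <- rem x s) y.
Proof. by move=> hx; rewrite (perm_big _ (perm_to_rem hx)) big_cons. Qed.

Lemma rprime_dvd_prod p (s : seq A) : rprime p -> rdvd p (\prod_(x <- s) x) ->
  exists2 x, x \in s & rdvd p x.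
Proof.
move=> [p0 pu pp]; elim: s => [|x s IH].
  by rewrite big_nil => h; exfalso; apply: pu.
rewrite big_cons => /pp [h|h]; first by exists x => //; rewrite inE eqxx.
by have [y hy hpy] := IH h; exists y => //; rewrite inE hy orbT.
Qed.

Section Domain.
Hypothesis Ad : is_domain A.

Lemma dmulf_neq0 a b : a != 0 -> b != 0 -> a * b != 0.
Proof. by move=> ha hb; apply/eqP => /Ad [] /eqP; apply/negP. Qed.

Lemma dmulfI a b c : a != 0 -> a * b = a * c -> b = c.
Proof.
move=> ha h; apply/eqP; rewrite -subr_eq0; apply/eqP.
have : a * (b - c) = 0 by rewrite mulrBr h subrr.
by move/Ad => [h0|//]; move: ha; rewrite h0 eqxx.
Qed.

Lemma rprime_neq0 p : rprime p -> p != 0. Proof. by case. Qed.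

Lemma rprime_unit p e : runit e -> rprime p -> rprime (e * p).
Proof.
move=> he [p0 pu pp]; split.
- by apply: dmulf_neq0 => //; apply: runit_neq0.
- by move=> h; apply: pu; apply: runitMr h.
- move=> b c h; have : rdvd p (b * c) by apply: rdvd_trans h; apply: rdvd_mull; apply: rdvd_refl.
  move/pp => [h1|h1]; [left|right]; rewrite mulrC; apply: rdvd_unit_mul => //.
Qed.

Lemma rprime_irr p : rprime p -> rirreducible p.
Proof.
move=> [p0 pu pp]; split => // b c hbc.
have : rdvd p (b * c) by rewrite -hbc; apply: rdvd_refl.
move/pp => [[x hx]|[x hx]].
- right; exists x; apply: (@dmulfI p) => //.
  by rewrite mulr1 {1}hbc hx mulrAC mulrA.
- left; exists x; apply: (@dmulfI p) => //.
  by rewrite mulr1 {1}hbc hx mulrCA.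
Qed.

Lemma irr_unit p e : runit e -> rirreducible p -> rirreducible (e * p).
Proof.
move=> he [p0 pu pp]; split.
- by apply: dmulf_neq0 => //; apply: runit_neq0.
- by move=> h; apply: pu; apply: runitMr h.
- move=> b c h.
  have [x hx] := he.
  have : p = (x * b) * c by rewrite -mulrA -h mulrA (mulrC x) -hx mul1r.
  move/pp => [h1|h1]; last by right.
  by left; apply: runitMr h1.
Qed.

Definition PF := forall a : A, a != 0 -> exists e (s : seq A),
  [/\ runit e, (forall x, x \in s -> rprime x) & a = e * \prod_(x <- s) x].

Lemma PF_irr_prime : PF -> forall a, rirreducible a -> rprime a.
Proof.
move=> hPF a ha; case: (ha) => a0 _ _.
have [e [s [he hs ea]]] := hPF a a0.
rewrite ea in ha *; case: ha => {}a0 au airr.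
case: s hs au airr a0 ea => [|x s] hs au airr a0 ea.
  by exfalso; apply: au; rewrite big_nil mulr1.
move: airr; rewrite big_cons mulrA => /(_ _ _ erefl) [h|h].
  have hx : rprime x by apply: hs; rewrite inE eqxx.
  by exfalso; case: hx => _ + _; apply; apply: runitMr h.
rewrite mulrC mulrA; apply: rprime_unit; first by apply: runitM.
by apply: hs; rewrite inE eqxx.
Qed.

Lemma prime_unique (s t : seq A) e : runit e ->
  (forall x, x \in s -> rprime x) -> (forall x, x \in t -> rprime x) ->
  \prod_(x <- s) x = e * \prod_(x <- t) x ->
  size s = size t /\
  exists2 t' : seq A, perm_eq t t' &
    forall i, (i < size s)%N -> rassoc (nth 0 s i) (nth 0 t' i).
Proof.
elim: s t e => [|x s IH] t e he hs ht.
  case: t ht => [|y t] ht.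
    by move=> _; split => //; exists [::].
  rewrite big_nil big_cons => h; exfalso.
  have hy : rprime y by apply: ht; rewrite inE eqxx.
  case: hy => _ + _; apply; apply: (@runitMl _ (e * \prod_(x <- t) x)).
  by exists 1; rewrite mulr1 mulrCA -h.
rewrite big_cons => h.
have hx : rprime x by apply: hs; rewrite inE eqxx.
have : rdvd x (e * \prod_(y <- t) y) by rewrite -h; apply: rdvd_mulr; apply: rdvd_refl.
move/(rdvd_mul_unit he)/(rprime_dvd_prod hx) => [y yt [c hc]].
have hy : rprime y by apply: ht.
have cu : runit c.
  have [_ _ yi] := rprime_irr hy.
  case: (yi _ _ hc) => // xu; by case: hx.
move: h; rewrite (prod_rem yt) {1}hc -mulrA mulrCA => /(dmulfI (rprime_neq0 hx)).
rewrite mulrA => h.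
have [] := IH (rem y t) (e * c) (runitM he cu).
- by move=> z hz; apply: hs; rewrite inE hz orbT.
- by move=> z hz; apply: ht; apply: (mem_rem hz).
- exact: h.
move=> hsz [t' hp hi]; split.
  by rewrite (perm_size (perm_to_rem yt)) /= hsz.
exists (y :: t').
  by apply: (perm_trans (perm_to_rem yt)); rewrite perm_cons.
by move=> [|i] hi' /=; [exists c | apply: hi].
Qed.


Lemma PF_UFD : PF -> UFD A.
Proof.
move=> hPF; split => //.
- move=> a a0 au; have [e [s [he hs ea]]] := hPF a a0.
  case: s hs ea => [|x s] hs ea.
    by exfalso; apply: au; rewrite ea big_nil mulr1.
  exists ((e * x) :: s); split => //.
  + move=> y; rewrite inE => /orP [/eqP ->|hy].
      by apply: rprime_irr; apply: rprime_unit => //; apply: hs; rewrite inE eqxx.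
    by apply: rprime_irr; apply: hs; rewrite inE hy orbT.
  + by rewrite ea !big_cons mulrA.
- move=> s t hs ht h.
  apply: (@prime_unique s t 1 runit1).
  + by move=> x hx; apply: PF_irr_prime => //; apply: hs.
  + by move=> x hx; apply: PF_irr_prime => //; apply: ht.
  + by rewrite mul1r.
Qed.

Lemma prime_pow_dvd_coprime p x b n : rprime p -> ~ rdvd p x ->
  rdvd (p ^+ n) (x * b) -> rdvd (p ^+ n) b.
Proof.
move=> hp hpx; elim: n b => [|n IH] b h; first by apply: rdvd_unit; rewrite expr0; apply: runit1.
have : rdvd p (x * b) by apply: rdvd_trans h; rewrite exprS; apply: rdvd_mulr; apply: rdvd_refl.
case: (hp) => p0 _ pp; move/pp => [//|[b' hb']].
move: h; rewrite hb' => [[y hy]].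
have : rdvd (p ^+ n) (x * b').
  exists y; apply: (dmulfI p0); by rewrite mulrCA hy exprS mulrA.
move/IH => h2; rewrite exprS; apply: rdvd_mul2 => //; apply: rdvd_refl.
Qed.

Lemma prime_pow_bound p (s : seq A) e n : rprime p -> runit e ->
  (forall x, x \in s -> rprime x) -> rdvd (p ^+ n) (e * \prod_(x <- s) x) ->
  (n <= size s)%N.
Proof.
move=> hp; elim: s e n => [|x s IH] e n he hs.
  rewrite big_nil mulr1; case: n => [//|n] h; exfalso.
  case: hp => _ + _; apply; apply: (runit_dvd he); apply: rdvd_trans h.
  by rewrite exprS; apply: rdvd_mulr; apply: rdvd_refl.
case: n => [//|n]; rewrite big_cons mulrCA => h.
have hx : rprime x by apply: hs; rewrite inE eqxx.
have hs' : forall y, y \in s -> rprime y by move=> y hy; apply: hs; rewrite inE hy orbT.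
have [[c hc]|npx] := pselect (rdvd p x).
  have cu : runit c.
    have [_ _ xi] := rprime_irr hx.
    by case: (xi _ _ hc) => // pu; case: hp.
  move: h; rewrite hc -mulrA => [[y hy]].
  have : rdvd (p ^+ n) ((c * e) * \prod_(x <- s) x).
    exists y; apply: (dmulfI (rprime_neq0 hp)).
    by rewrite -(mulrA c) hy exprS mulrA.
  by move/(IH _ _ (runitM cu he) hs') => h2 /=; rewrite ltnS.
have := prime_pow_dvd_coprime hp npx h.
move=> h2; apply: leq_trans (IH _ _ he hs' h2) _; exact: leqnSn.
Qed.

Lemma PF_bound : PF -> forall f a : A, f != 0 -> ~ runit f -> a != 0 ->
  exists N, ~ rdvd (f ^+ N) a.
Proof.
move=> hPF f a f0 fu a0.
have [e [l [he hl ef]]] := hPF f f0.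
case: l hl ef => [|p l] hl ef.
  by exfalso; apply: fu; rewrite ef big_nil mulr1.
have hp : rprime p by apply: hl; rewrite inE eqxx.
have pf : rdvd p f by rewrite ef big_cons mulrCA; apply: rdvd_mulr; apply: rdvd_refl.
have [e' [s [he' hs ea]]] := hPF a a0.
exists (size s).+1 => h.
have : rdvd (p ^+ (size s).+1) (e' * \prod_(x <- s) x).
  by rewrite -ea; apply: rdvd_trans h; apply: rdvd_exp.
by move/(prime_pow_bound hp he' hs); rewrite ltnn.
Qed.

End Domain.

Lemma rassoc_dvd a b : rassoc a b -> rdvd b a.
Proof.
move=> [w [[w' hw] ->]]; exists w'.
by rewrite -mulrA -hw mulr1.
Qed.

Lemma UFD_irr_prime : UFD A -> forall a, rirreducible a -> rprime a.
Proof.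
move=> [Ad ex un] a ha; case: (ha) => a0 au _; split => // b c [d hd].
have [->|b0] := eqVneq b 0; first by left; apply: rdvd0.
have [->|c0] := eqVneq c 0; first by right; apply: rdvd0.
have [bu|bu] := pselect (runit b).
  by right; apply: (rdvd_mul_unit bu); rewrite hd; apply: rdvd_mulr; apply: rdvd_refl.
have [cu|cu] := pselect (runit c).
  by left; apply: (rdvd_mul_unit cu); rewrite mulrC hd; apply: rdvd_mulr; apply: rdvd_refl.
have [sb [sb0 hsb eb]] := ex b b0 bu.
have [sc [sc0 hsc ec]] := ex c c0 cu.
have d0 : d != 0.
  apply/eqP => d0; move: hd; rewrite d0 mulr0 => /Ad [] /eqP; by apply/negP.
have [du|du] := pselect (runit d).
  have := un (sb ++ sc) [:: a * d].
  case.
  - by move=> x; rewrite mem_cat => /orP [] ?; [apply: hsb|apply: hsc].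
  - by move=> x; rewrite inE => /eqP ->; rewrite mulrC; apply: irr_unit.
  - by rewrite big_cat /= -eb -ec big_seq1.
  move=> + _; rewrite size_cat /=.
  by case: sb sb0 {hsb eb} => // ? ?; case: sc sc0 {hsc ec} => // ? ? _; rewrite addnS.
have [sd [sd0 hsd ed]] := ex d d0 du.
have := un (sb ++ sc) (a :: sd).
case.
- by move=> x; rewrite mem_cat => /orP [] ?; [apply: hsb|apply: hsc].
- by move=> x; rewrite inE => /orP [/eqP ->|?] //; apply: hsd.
- by rewrite big_cat /= -eb -ec big_cons -ed.
move=> hsz [t' hp hi].
have at' : a \in t' by rewrite -(perm_mem hp) inE eqxx.
have hlt : (index a t' < size (sb ++ sc))%N.
  by rewrite hsz (perm_size hp) index_mem.
have := hi _ hlt; rewrite nth_index // => /rassoc_dvd hz.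
move: hz; rewrite nth_cat; case: ifP => hi2 hz.
  left; apply: rdvd_trans hz _; rewrite eb; apply: rdvd_prod; exact: mem_nth.
right; apply: rdvd_trans hz _; rewrite ec; apply: rdvd_prod; apply: mem_nth.
by rewrite size_cat in hlt; rewrite ltn_subLR // leqNgt hi2.
Qed.

Lemma UFD_PF : UFD A -> PF.
Proof.
move=> hU; case: (hU) => Ad ex _.
move=> a a0; have [au|au] := pselect (runit a).
  by exists a, [::]; split => //; rewrite big_nil mulr1.
have [s [_ hs ea]] := ex a a0 au.
exists 1, s; split; [exact: runit1| |by rewrite mul1r].
by move=> x hx; apply: UFD_irr_prime => //; apply: hs.
Qed.

End GenDiv.

Lemma runitP (B : comUnitRingType) (a : B) : runit a <-> a \is a GRing.unit.
Proof.
split => [[x hx]|/unitrPr [x hx]]; first by apply/unitrPr; exists x.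
by exists x.
Qed.

Lemma idomain_domain (B : idomainType) : is_domain B.
Proof. by move=> a b /eqP; rewrite mulf_eq0 => /orP [] /eqP; [left|right]. Qed.

Lemma rdvd_sum (B : comNzRingType) (a : B) (I : Type) (r : seq I) (P : pred I) (F : I -> B) :
  (forall i, P i -> rdvd a (F i)) -> rdvd a (\sum_(i <- r | P i) F i).
Proof.
move=> h; apply: (big_ind (fun x => rdvd a x)) => //; first exact: rdvd0.
by move=> x y; apply: rdvdD.
Qed.

Lemma PF_mul (B : comNzRingType) (a b ea eb : B) (sa sb : seq B) :
  runit ea -> runit eb -> a = ea * \prod_(x <- sa) x -> b = eb * \prod_(x <- sb) x ->
  a * b = (ea * eb) * \prod_(x <- sa ++ sb) x.
Proof. by move=> _ _ -> ->; rewrite big_cat /= mulrACA. Qed.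

Definition PFg (B : comNzRingType) (a : B) := exists e (s : seq B),
  [/\ runit e, (forall x, x \in s -> rprime x) & a = e * \prod_(x <- s) x].

Section PolyUFD.
Variable R : idomainType.
Implicit Types (c e p : R) (g h q r : {poly R}).

Lemma polyC_runit c : runit (c%:P : {poly R}) <-> runit c.
Proof.
rewrite !runitP poly_unitE size_polyC coefC /=.
by have [->|c0] := eqVneq c 0; [rewrite unitr0 | ].
Qed.

Lemma dvdC_coef p g : rdvd p%:P g <-> forall i, rdvd p g`_i.
Proof.
split => [[h ->] i|h]; first by rewrite coefCM; exists h`_i.
have [F hF] := choice h.
exists (\poly_(i < size g) F i); apply/polyP => i.
rewrite coefCM coef_poly; case: ltnP => hi; first exact: hF.
by rewrite mulr0 nth_default.
Qed.

Lemma primeC p : rprime p -> rprime (p%:P : {poly R}).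
Proof.
move=> hp; case: (hp) => p0 pu pp; split.
- by rewrite polyC_eq0.
- by move/polyC_runit.
move=> g h ghd; apply/or_asboolP; apply/negPn/negP; rewrite negb_or => /andP [].
move=> /asboolPn hg /asboolPn hh.
have exg : exists i, `[< ~ rdvd p g`_i >].
  apply/not_existsP => H; apply: hg; apply/dvdC_coef => i.
  by apply: contrapT => nq; apply: (H i); apply/asboolP.
have exh : exists i, `[< ~ rdvd p h`_i >].
  apply/not_existsP => H; apply: hh; apply/dvdC_coef => i.
  by apply: contrapT => nq; apply: (H i); apply/asboolP.
case: (ex_minnP exg) => i0 /asboolP hi0 mi0.
case: (ex_minnP exh) => j0 /asboolP hj0 mj0.
have lti : forall i, (i < i0)%N -> rdvd p g`_i.
  move=> i hi; apply: contrapT => nq; suff : (i0 <= i)%N by rewrite leqNgt hi.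
  by apply: mi0; apply/asboolP.
have ltj : forall j, (j < j0)%N -> rdvd p h`_j.
  move=> j hj; apply: contrapT => nq; suff : (j0 <= j)%N by rewrite leqNgt hj.
  by apply: mj0; apply/asboolP.
have := (proj1 (dvdC_coef p (g * h))) ghd (i0 + j0)%N.
rewrite coefM (bigD1 (Ordinal (leq_addr j0 i0.+1 : (i0 < (i0 + j0).+1)%N))) //= addKn.
move=> hs; have : rdvd p (g`_i0 * h`_j0).
  have -> : g`_i0 * h`_j0 = (g`_i0 * h`_j0 + \sum_(i < (i0 + j0).+1 | i != Ordinal (leq_addr j0 i0.+1 : (i0 < (i0 + j0).+1)%N)) g`_i * h`_(i0 + j0 - i)) - \sum_(i < (i0 + j0).+1 | i != Ordinal (leq_addr j0 i0.+1 : (i0 < (i0 + j0).+1)%N)) g`_i * h`_(i0 + j0 - i).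
    by rewrite addrK.
  apply: rdvdB => //; apply: rdvd_sum => i hi.
  have : val i != i0 by apply: contraNneq hi => hi'; apply/eqP; apply: val_inj.
  rewrite neq_ltn => /orP [hlt|hgt]; first by apply: rdvd_mulr; apply: lti.
  apply: rdvd_mull; apply: ltj.
  have := ltn_ord i; rewrite ltnS => hle.
  have hgt' : (i0 < nat_of_ord i)%N := hgt.
  move: (nat_of_ord i) hgt' hle => k hgt' hle; lia.
by move/pp => [].
Qed.


Definition primitive q := forall p, rprime p -> ~ rdvd p%:P q.

Lemma polyC_prod (s : seq R) : (\prod_(x <- s) x)%:P = \prod_(x <- map polyC s) x.
Proof. by rewrite rmorph_prod big_map. Qed.

Lemma PFg_const c : PF R -> c != 0 -> PFg (c%:P : {poly R}).
Proof.
move=> RPF c0; have [e [s [he hs ->]]] := RPF c c0.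
exists e%:P, (map polyC s); split.
- by apply/polyC_runit.
- by move=> x /mapP [y ys ->]; apply: primeC; apply: hs.
- by rewrite polyCM polyC_prod.
Qed.

Hypothesis RPF : PF R.
Let Rd := @idomain_domain R.
Let Pd := @idomain_domain {poly R}.

Lemma prim_cancel q g c : primitive q -> c != 0 -> rdvd q (c%:P * g) -> rdvd q g.
Proof.
move=> qp c0; have [e [s [he hs ->]]] := RPF c0.
elim: s e g he hs => [|x s IH] e g he hs.
  rewrite big_nil mulr1 => h; apply: (rdvd_mul_unit _ h); exact/polyC_runit.
have hx : rprime x by apply: hs; rewrite inE eqxx.
have -> : (e * \prod_(x0 <- x :: s) x0)%:P * g = (e * \prod_(x0 <- s) x0)%:P * (x%:P * g).
  by rewrite big_cons !polyCM; ring.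
move/IH => /(_ he) [].
  by move=> y hy; apply: hs; rewrite inE hy orbT.
move=> w hw.
have : rdvd x%:P (q * w) by rewrite -hw; apply: rdvd_mulr; apply: rdvd_refl.
case: (primeC hx) => x0 _ xp; move/xp => [hxq|[w' hw']]; first by exfalso; apply: (qp x hx).
exists w'; apply: (dmulfI Pd x0); rewrite hw hw'; ring.
Qed.

Lemma irr_prim q : rirreducible q -> (1 < size q)%N -> primitive q.
Proof.
move=> [q0 qu qi] hs p hp [r hr].
case: (qi _ _ hr) => [/polyC_runit|/runitP]; first by case: hp.
rewrite poly_unitE => /andP [/eqP sr _].
move: hs; rewrite hr size_Cmul ?sr //; by case: hp.
Qed.

Lemma irr_prime_poly q : rirreducible q -> (1 < size q)%N -> rprime q.
Proof.
move=> hq hs; have qprim := irr_prim hq hs; case: (hq) => q0 qu qi.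
split => // g h hgh.
have [hg|hg] := pselect (rdvd q g); [by left|right].
pose J a := rdvd q (a * h).
have JB : forall a b, J a -> J b -> J (a - b) by move=> a b ha hb; rewrite /J mulrBl; apply: rdvdB.
have JM : forall a b, J b -> J (a * b) by move=> a b hb; rewrite /J -mulrA; apply: rdvd_mull.
have Jq : J q by rewrite /J; apply: rdvd_mulr; apply: rdvd_refl.
have exn : exists n, `[< exists r, [/\ J r, r != 0 & size r = n] >].
  by exists (size q); apply/asboolP; exists q.
case: (ex_minnP exn) => n0 /asboolP [r0 [Jr0 r00 sr0]] mn0.
have K : forall a, J a -> exists2 c, c != 0 & rdvd r0 (c%:P * a).
  move=> a Ja; exists (lead_coef r0 ^+ scalp a r0).
    by rewrite expf_neq0 // lead_coef_eq0.
  have hdv := Pdiv.Idomain.divp_eq a r0.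
  have Jm : J (a %% r0).
    have -> : a %% r0 = (lead_coef r0 ^+ scalp a r0)%:P * a - (a %/ r0) * r0.
      by rewrite mul_polyC hdv addrC addKr.
    by apply: JB; apply: JM.
  have m0 : a %% r0 = 0.
    apply: contrapT => /eqP m0.
    have : (n0 <= size (a %% r0)%R)%N by apply: mn0; apply/asboolP; exists (a %% r0).
    by rewrite -sr0 leqNgt ltn_modpN0.
  by exists (a %/ r0); rewrite mul_polyC hdv m0 addr0 mulrC.
have D : forall (s : seq R) e r d, runit e -> (forall x, x \in s -> rprime x) -> J r ->
    (e * \prod_(x <- s) x)%:P * q = d * r ->
    exists r', [/\ J r', rdvd r' q & rdvd r' r].
  elim => [|x s IH] e r d he hs1 Jr.
    rewrite big_nil mulr1 => hd; exists r; split => //; last exact: rdvd_refl.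
    apply: (@rdvd_mul_unit _ _ _ e%:P); first exact/polyC_runit.
    by rewrite hd; apply: rdvd_mull; apply: rdvd_refl.
  have hx : rprime x by apply: hs1; rewrite inE eqxx.
  have hs' : forall y, y \in s -> rprime y by move=> y hy; apply: hs1; rewrite inE hy orbT.
  have -> : (e * \prod_(x0 <- x :: s) x0)%:P * q = x%:P * ((e * \prod_(x0 <- s) x0)%:P * q).
    by rewrite big_cons !polyCM; ring.
  move=> hd.
  have : rdvd x%:P (d * r) by rewrite -hd; apply: rdvd_mulr; apply: rdvd_refl.
  case: (primeC hx) => x0 _ xp; move/xp => [[d' hd']|[r' hr']].
    apply: (IH e r d') => //; apply: (dmulfI Pd x0); rewrite hd hd'; ring.
  have Jr' : J r'.
    apply: (prim_cancel qprim (rprime_neq0 hx)).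
    by move: Jr; rewrite /J hr' mulrA.
  have [r'' [J'' h1 h2]] : exists r'', [/\ J r'', rdvd r'' q & rdvd r'' r'].
    apply: (IH e r' d) => //; apply: (dmulfI Pd x0); rewrite hd hr'; ring.
  exists r''; split => //; rewrite hr'; exact: rdvd_mull.
have [c c0 [d0 hd0]] := K q Jq.
have [e [s [he hs1 ec]]] := RPF c0.
have hd1 : (e * \prod_(x <- s) x)%:P * q = d0 * r0 by rewrite -ec hd0 mulrC.
have [r' [Jr' r'q r'r0]] := D s e r0 d0 he hs1 Jr0 hd1.
case: r'q => m hm.
case: (qi _ _ hm) => [r'u|[m' hm']].
  by apply: (rdvd_mul_unit r'u).
exfalso; apply: hg.
have Jg : J g by [].
have [c' c'0 hc'] := K g Jg.
apply: (prim_cancel qprim c'0); apply: rdvd_trans (rdvd_trans r'r0 hc').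
by exists m'; rewrite hm -mulrA -hm' mulr1.
Qed.

Lemma polyPF : PF {poly R}.
Proof.
suff H : forall n (g : {poly R}), (size g <= n)%N -> g != 0 -> PFg g.
  by move=> g g0; apply: (H (size g)).
elim => [|n IH] g hsz g0.
  by move: hsz; rewrite leqn0 size_poly_eq0 (negbTE g0).
have main : forall g, (size g <= n.+1)%N -> g != 0 ->
    (forall p g', rprime p -> g = p%:P * g' -> PFg g') -> PFg g.
  move=> {hsz g0} g hsz g0 hrec.
  have [s1|s2] := leqP (size g) 1.
    rewrite (size1_polyC s1); apply: PFg_const => //.
    by move: g0; rewrite {1}(size1_polyC s1) polyC_eq0.
  have [[p [hp [g' hg']]]|np] := pselect (exists p, rprime p /\ rdvd p%:P g).
    rewrite hg'; have [e [s [he hs ->]]] := hrec p g' hp hg'.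
    exists e, (p%:P :: s); split => //.
      by move=> x; rewrite inE => /orP [/eqP ->|]; [apply: primeC|apply: hs].
    by rewrite big_cons; ring.
  have gp : primitive g by move=> p hp hd; apply: np; exists p.
  have [gi|gni] := pselect (rirreducible g).
    exists 1, [:: g]; split; first exact: runit1.
      by move=> x; rewrite inE => /eqP ->; apply: irr_prime_poly.
    by rewrite big_seq1 mul1r.
  have gu : ~ runit g.
    by move/runitP; rewrite poly_unitE => /andP [/eqP h _]; move: s2; rewrite h.
  have [a [b [hab au bu]]] : exists a b, [/\ g = a * b, ~ runit a & ~ runit b].
    apply: contrapT => H; apply: gni; split => // a b hab.
    apply: contrapT => H2; apply: H; exists a, b; split => // => [ha|hb]; apply: H2; by [left|right].
  have a0 : a != 0 by apply: contraNneq g0 => a0; rewrite hab a0 mul0r.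
  have b0 : b != 0 by apply: contraNneq g0 => b0; rewrite hab b0 mulr0.
  have big : forall a b, g = a * b -> a != 0 -> ~ runit a -> (1 < size a)%N.
    move=> a1 b1 hab1 a10 a1u; rewrite ltnNge; apply/negP => s1.
    have a00 : a1`_0 != 0 by move: a10; rewrite {1}(size1_polyC s1) polyC_eq0.
    have [e [s [he hs ea]]] := RPF a00.
    case: s hs ea => [|x s] hs ea.
      by apply: a1u; rewrite (size1_polyC s1) ea big_nil mulr1; apply/polyC_runit.
    apply: (gp x); first by apply: hs; rewrite inE eqxx.
    rewrite hab1 (size1_polyC s1) ea big_cons; apply: rdvd_mulr.
    by exists (e * \prod_(y <- s) y)%:P; rewrite -polyCM; congr (_%:P); ring.
  have sa := big a b hab a0 au.
  have sb := big b a (etrans hab (mulrC a b)) b0 bu.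
  have hsz2 : size g = (size a + size b).-1 by rewrite hab size_mul.
  have sza : (size a <= n)%N by move: hsz; rewrite hsz2; lia.
  have szb : (size b <= n)%N by move: hsz; rewrite hsz2; lia.
  have [ea [sa' [hea hsa ea']]] := IH a sza a0.
  have [eb [sb' [heb hsb eb']]] := IH b szb b0.
  exists (ea * eb), (sa' ++ sb'); split; first exact: runitM.
    by move=> x; rewrite mem_cat => /orP [] ?; [apply: hsa|apply: hsb].
  by rewrite hab; apply: PF_mul.
have lg0 : lead_coef g != 0 by rewrite lead_coef_eq0.
have [e [s [he hs hl]]] := RPF lg0.
suff inner : forall m g, (size g <= n.+1)%N -> g != 0 -> forall e (s : seq R), runit e ->
    (forall x, x \in s -> rprime x) -> (size s <= m)%N -> lead_coef g = e * \prod_(x <- s) x -> PFg g.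
  exact: (inner (size s) g hsz g0 e s he hs (leqnn _) hl).
elim => [|m IHm] {hsz g0 hl he hs e s lg0}g hsz g0 e s he hs hsm hl; apply: main => // p g' hp hg'.
  move: hsm; rewrite leqn0 size_eq0 => /eqP s0; move: hl; rewrite s0 big_nil mulr1.
  rewrite hg' lead_coefM lead_coefC => hl; exfalso.
  by case: hp => _ + _; apply; apply: (runitMl (b := lead_coef g')); rewrite hl.
have g'0 : g' != 0 by apply: contraNneq g0 => h; rewrite hg' h mulr0.
have : rdvd p (\prod_(x <- s) x).
  apply: (rdvd_mul_unit he); rewrite -hl hg' lead_coefM lead_coefC.
  by apply: rdvd_mulr; apply: rdvd_refl.
move/(rprime_dvd_prod hp) => [x xs [c hc]].
have hx : rprime x by apply: hs.
have cu : runit c.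
  have [_ _ xi] := rprime_irr Rd hx.
  by case: (xi _ _ hc) => // pu; case: hp.
apply: (IHm g' _ g'0 (e * c) (rem x s)).
- by move: hsz; rewrite hg' size_Cmul // rprime_neq0.
- exact: runitM.
- by move=> y hy; apply: hs; apply: (mem_rem hy).
- by rewrite size_rem // -ltnS prednK // ?(leq_trans _ hsm) //; case: (s) xs.
- apply: (dmulfI Rd (rprime_neq0 hp)).
  have hlg : lead_coef g = p * lead_coef g' by rewrite hg' lead_coefM lead_coefC.
  rewrite -hlg hl (prod_rem xs) hc; ring.
Qed.

End PolyUFD.

Section Monomial.
Variable R : idomainType.

Lemma polyXn_neq0 n : ('X^n : {poly R}) != 0.
Proof. by rewrite -size_poly_eq0 size_polyXn. Qed.

Lemma XPOW (A : {poly R}) : A != 0 -> exists al (A1 : {poly R}), A = 'X^al * A1 /\ A1`_0 != 0.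
Proof.
move: {2}(size A) (leqnn (size A)) => n; elim: n A => [|n IH] A hs A0.
  by move: hs; rewrite leqn0 size_poly_eq0 (negbTE A0).
have [a0|a0] := eqVneq A`_0 0; last by exists 0%N, A; rewrite expr0 mul1r.
have hA : A = 'X * drop_poly 1 A.
  apply/polyP => i; rewrite coefXM coef_drop_poly; case: i => [|i] //=; by rewrite addn1.
have d0 : drop_poly 1 A != 0 by apply: contraNneq A0 => h; rewrite hA h mulr0.
have hs' : (size (drop_poly 1 A) <= n)%N by rewrite size_drop_poly; lia.
have [al [A1 [h1 h2]]] := IH (drop_poly 1 A) hs' d0.
by exists al.+1, A1; rewrite hA h1 exprS mulrA.
Qed.

Lemma DM (A B : {poly R}) (c : R) n : c != 0 -> A * B = c%:P * 'X^n ->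
  exists a al, [/\ a != 0, (al <= n)%N & A = a%:P * 'X^al].
Proof.
move=> c0 hAB.
have hAB0 : A * B != 0 by rewrite hAB mulf_neq0 ?polyC_eq0 ?polyXn_neq0.
have A0 : A != 0 by apply: contraNneq hAB0 => ->; rewrite mul0r.
have B0 : B != 0 by apply: contraNneq hAB0 => ->; rewrite mulr0.
have [al [A1 [hA hA1]]] := XPOW A0.
have [be [B1 [hB hB1]]] := XPOW B0.
have e1 : 'X^(al + be) * (A1 * B1) = c%:P * 'X^n by rewrite -hAB hA hB exprD; ring.
have hn : (al + be)%N = n.
  have := congr1 (fun p : {poly R} => p`_(al + be)%N) e1; rewrite /= coefXnM ltnn subnn coef0M coefCM coefXn.
  case: eqP => // _; rewrite mulr0 => /eqP; by rewrite mulf_eq0 (negbTE hA1) (negbTE hB1).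
move: e1; rewrite hn mulrC => /(mulIf (polyXn_neq0 n)) e2.
have A10 : A1 != 0 by apply: contraNneq hA1 => ->; rewrite coef0.
have B10 : B1 != 0 by apply: contraNneq hB1 => ->; rewrite coef0.
have hs : size A1 = 1%N.
  have := congr1 (fun p : {poly R} => size p) e2; rewrite /= size_mul // size_polyC c0.
  have := size_poly_gt0 A1; have := size_poly_gt0 B1; rewrite A10 B10 /= => h1 h2 h3; lia.
exists A1`_0, al; split => //; first by rewrite -hn leq_addr.
by rewrite hA {1}(size1_polyC (eq_leq hs)) mulrC.
Qed.

End Monomial.

Section XIrr.
Variable R : idomainType.

Lemma X_irr : rirreducible ('X : {poly R}).
Proof.
split.
- by rewrite polyX_eq0.
- by move/runitP; rewrite poly_unitE size_polyX.
move=> b c hbc.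
have b0 : b != 0 by apply/eqP => hb; move: hbc; rewrite hb mul0r => /eqP; rewrite polyX_eq0.
have c0 : c != 0 by apply/eqP => hc; move: hbc; rewrite hc mulr0 => /eqP; rewrite polyX_eq0.
have hs := congr1 (fun p : {poly R} => size p) hbc; rewrite /= size_polyX size_mul // in hs.
change (2%N = (size b + size c).-1) in hs.
have hl := congr1 lead_coef hbc; rewrite lead_coefX lead_coefM in hl.
have := size_poly_gt0 b; have := size_poly_gt0 c; rewrite b0 c0 => hc hb.
have [sb|sb] := eqVneq (size b) 1%N.
  left; rewrite (size1_polyC (eq_leq sb)); apply/polyC_runit.
  by exists (lead_coef c); rewrite hl lead_coefE sb.
right; have sc : size c = 1%N.
  move/eqP: sb; move: hb hc hs; move: (size b) (size c) => x y; clear. lia.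
rewrite (size1_polyC (eq_leq sc)); apply/polyC_runit.
by exists (lead_coef b); rewrite hl (lead_coefE c) sc mulrC.
Qed.

End XIrr.

Section SRing.
Local Open Scope quotient_scope.
Variables (R : idomainType) (f : R).
Hypotheses (hf0 : f != 0) (hfu : f \isn't a GRing.unit).

Local Notation T := {poly {poly R}}.
Local Notation S := (S_uv hfu).
Implicit Types (p q r : T) (P Q : {poly R}).

Definition piS (p : T) : S := \pi_S p.

Lemma piSM p q : piS (p * q) = piS p * piS q. Proof. by rewrite /piS rmorphM. Qed.
Lemma piSD p q : piS (p + q) = piS p + piS q. Proof. by rewrite /piS rmorphD. Qed.
Lemma piSB p q : piS (p - q) = piS p - piS q. Proof. by rewrite /piS rmorphB. Qed.
Lemma piS1 : piS 1 = 1. Proof. by rewrite /piS rmorph1. Qed.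
Lemma piS0 : piS 0 = 0. Proof. by rewrite /piS rmorph0. Qed.
Lemma piSX p n : piS (p ^+ n) = piS p ^+ n. Proof. by rewrite /piS rmorphXn. Qed.

Lemma piS_eq p q : piS p = piS q <-> exists r, p - q = r * uv_f f.
Proof.
rewrite /piS; split; first by move/eqP; rewrite piE Quotient.equivE; move/asboolP.
by move=> h; apply/eqP; rewrite piE Quotient.equivE; apply/asboolP.
Qed.

Lemma piS_eq0 p : piS p = 0 <-> exists r, p = r * uv_f f.
Proof. by rewrite -piS0 piS_eq subr0. Qed.

Lemma piS_surj (s : S) : exists p, s = piS p.
Proof. by exists (repr s); rewrite /piS reprK. Qed.

Definition U : S := piS (var_u R).
Definition V : S := piS (var_v R).
Definition kap (c : R) : S := piS ((c%:P)%:P).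
Definition iota (P : {poly R}) : S := piS (P%:P).

Lemma UV : U * V = kap f.
Proof.
apply/eqP; rewrite -subr_eq0 /U /V /kap -piSM -piSB; apply/eqP.
by apply/piS_eq0; exists 1; rewrite mul1r.
Qed.

Lemma iotaM P Q : iota (P * Q) = iota P * iota Q. Proof. by rewrite /iota polyCM piSM. Qed.
Lemma iotaD P Q : iota (P + Q) = iota P + iota Q. Proof. by rewrite /iota polyCD piSD. Qed.
Lemma iotaB P Q : iota (P - Q) = iota P - iota Q. Proof. by rewrite /iota polyCB piSB. Qed.
Lemma iota1 : iota 1 = 1. Proof. by rewrite /iota piS1. Qed.
Lemma iota0 : iota 0 = 0. Proof. by rewrite /iota piS0. Qed.
Lemma iotaX : iota 'X = U. Proof. by []. Qed.
Lemma iotaC c : iota c%:P = kap c. Proof. by []. Qed.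
Lemma iotaXn P n : iota (P ^+ n) = iota P ^+ n.
Proof. by elim: n => [|n IH]; rewrite ?expr0 ?iota1 // !exprS iotaM IH. Qed.
Lemma kapM a b : kap (a * b) = kap a * kap b. Proof. by rewrite -!iotaC polyCM iotaM. Qed.
Lemma kap1 : kap 1 = 1. Proof. exact: iota1. Qed.
Lemma kapX a n : kap (a ^+ n) = kap a ^+ n. Proof. by rewrite -!iotaC rmorphXn iotaXn. Qed.

Lemma iota_prod (s : seq {poly R}) : iota (\prod_(x <- s) x) = \prod_(x <- s) iota x.
Proof. by elim: s => [|x s IH]; rewrite ?big_nil ?iota1 // !big_cons iotaM IH. Qed.

Lemma KL (s : S) : exists N P, U ^+ N * s = iota P.
Proof.
have [p ->] := piS_surj s.
elim/poly_ind: p => [|p c [N [P hP]]]; first by exists 0%N, 0; rewrite piS0 mulr0 iota0.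
exists N.+1, (f%:P * P + 'X ^+ N.+1 * c).
rewrite piSD piSM iotaD iotaM -hP iotaM iotaXn iotaX iotaC -UV.
by rewrite /V /var_v /iota exprS; ring.
Qed.

Lemma size_uvf : size (uv_f f) = 2%N.
Proof.
rewrite /uv_f /var_u /var_v -polyCN size_MXaddC.
by rewrite polyC_eq0 polyX_eq0 /= size_polyC polyX_eq0.
Qed.

Lemma iota_inj P Q : iota P = iota Q -> P = Q.
Proof.
move=> /piS_eq [r hr]; apply/eqP; rewrite -subr_eq0 -polyC_eq0 polyCB hr.
have [->|r0] := eqVneq r 0; first by rewrite mul0r.
have hs : (size (r * uv_f f)%R <= 1)%N by rewrite -hr -polyCB size_polyC leq_b1.
have r0' : (0 < size r)%N by rewrite size_poly_gt0.
have u0 : uv_f f != 0 by rewrite -size_poly_eq0 size_uvf.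
exfalso; move: hs; rewrite size_mul // size_uvf addnS /= addn1 ltnS leqNgt r0'. by [].
Qed.

Lemma iota_eq0 P : iota P = 0 -> P = 0.
Proof. by rewrite -iota0 => /iota_inj. Qed.


Definition e0 (p : T) : {poly R} := map_poly (horner_eval 0) p.

Lemma e0M p q : e0 (p * q) = e0 p * e0 q. Proof. by rewrite /e0 rmorphM. Qed.
Lemma e0D p q : e0 (p + q) = e0 p + e0 q. Proof. by rewrite /e0 rmorphD. Qed.
Lemma e0B p q : e0 (p - q) = e0 p - e0 q. Proof. by rewrite /e0 rmorphB. Qed.
Lemma e0C (c : {poly R}) : e0 c%:P = (c.[0])%:P. Proof. by rewrite /e0 map_polyC /= horner_evalE. Qed.
Lemma e0u : e0 (var_u R) = 0. Proof. by rewrite /var_u e0C hornerX. Qed.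
Lemma e0v : e0 (var_v R) = 'X. Proof. by rewrite /e0 /var_v map_polyX. Qed.
Lemma e0uvf : e0 (uv_f f) = - f%:P.
Proof. by rewrite /uv_f e0B e0M e0u mul0r e0C hornerC sub0r. Qed.
Lemma coef_e0 p i : (e0 p)`_i = (p`_i)`_0.
Proof. by rewrite /e0 coef_map /= horner_evalE horner_coef0. Qed.

Lemma poly_split0 (c : {poly R}) : c = (c`_0)%:P + 'X * drop_poly 1 c.
Proof.
apply/polyP => i; rewrite coefD coefC coefXM coef_drop_poly.
by case: i => [|i] /=; rewrite ?addr0 ?add0r ?addn1.
Qed.

Lemma DEC p : exists p', p = map_poly polyC (e0 p) + var_u R * p'.
Proof.
exists (\poly_(i < size p) drop_poly 1 p`_i).
apply/polyP => i; rewrite coefD /var_u coefCM coef_map /= coef_e0 coef_poly.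
case: ltnP => hi; first exact: poly_split0.
by rewrite nth_default // mulr0 addr0 coef0.
Qed.

Lemma U_dvd p : rdvd U (piS p) <-> rdvd (f%:P) (e0 p).
Proof.
split.
  move=> [s]; have [q ->] := piS_surj s; rewrite /U -piSM.
  move/piS_eq => [r hr]; move: (congr1 e0 hr).
  rewrite e0B e0M e0u mul0r subr0 e0M e0uvf => ->.
  exists (- e0 r). ring.
move=> [g hg]; have [p' hp'] := DEC p.
exists (V * piS (map_poly polyC g) + piS p').
rewrite hp' hg piSD rmorphM /= map_polyC /= !piSM.
have -> : piS (f%:P)%:P = U * V by rewrite UV.
rewrite /U; ring.
Qed.

Lemma U_nzd (s : S) : U * s = 0 -> s = 0.
Proof.
have [p ->] := piS_surj s; rewrite /U -piSM => /piS_eq0 [r hr].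
have : e0 r = 0.
  move: (congr1 e0 hr); rewrite !e0M e0u mul0r e0uvf => /esym /eqP.
  by rewrite mulf_eq0 oppr_eq0 polyC_eq0 (negbTE hf0) orbF => /eqP.
move=> er; have [r' hr'] := DEC r; move: hr'; rewrite er rmorph0 add0r => hr'.
apply/piS_eq0; exists r'.
have u0 : var_u R != 0 by rewrite /var_u polyC_eq0 polyX_eq0.
by apply: (mulfI u0); rewrite hr hr' mulrA.
Qed.

Lemma U_nzdn (s : S) n : U ^+ n * s = 0 -> s = 0.
Proof. by elim: n s => [|n IH] s; rewrite ?expr0 ?mul1r // exprS -mulrA => /U_nzd /IH. Qed.

Lemma S_domain : is_domain S.
Proof.
move=> a b hab.
have [N [P hP]] := KL a; have [M [Q hQ]] := KL b.
have : iota (P * Q) = 0 by rewrite iotaM -hP -hQ mulrACA -exprD hab mulr0.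
move/iota_eq0/eqP; rewrite mulf_eq0 => /orP [] /eqP h0.
  by left; apply: (U_nzdn (n := N)); rewrite hP h0 iota0.
by right; apply: (U_nzdn (n := M)); rewrite hQ h0 iota0.
Qed.

Lemma U_neq0 : U != 0.
Proof.
apply/eqP; rewrite -iotaX -iota0 => /iota_inj /eqP; by rewrite polyX_eq0.
Qed.


Definition lam (p : T) : R := \sum_(j < size p) (p`_j)`_j * f ^+ j.

Lemma lam_widen n p : (size p <= n)%N -> lam p = \sum_(j < n) (p`_j)`_j * f ^+ j.
Proof.
move=> hn; rewrite /lam (big_ord_widen n (fun j => (p`_j)`_j * f ^+ j) hn) big_mkcond /=.
apply: eq_bigr => j _; case: ltnP => // hj.
by rewrite (nth_default _ hj) coef0 mul0r.
Qed.

Lemma lamB p q : lam (p - q) = lam p - lam q.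
Proof.
set n := maxn (size p) (size q).
have hp : (size p <= n)%N by rewrite leq_maxl.
have hq : (size q <= n)%N by rewrite leq_maxr.
have hpq : (size (p - q)%R <= n)%N by apply: leq_trans (size_polyD _ _) _; rewrite size_polyN.
rewrite (lam_widen hp) (lam_widen hq) (lam_widen hpq) -sumrB.
by apply: eq_bigr => j _; rewrite coefB coefB mulrBl.
Qed.

Lemma lam_uvf q : lam (q * uv_f f) = 0.
Proof.
set n := (size q).+1.
have hq : (size q <= n)%N by [].
have h1 : (size (q * (f%:P)%:P)%R <= n)%N.
  apply: leq_trans (size_mul_leq _ _) _; rewrite size_polyC /n; case: (_ != _) => /=; lia.
have h2 : (size (q * var_u R * var_v R)%R <= n)%N.
  apply: leq_trans (size_mul_leq _ _) _; rewrite size_polyX addn2 /=.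
  apply: leq_trans (size_mul_leq _ _) _; rewrite /var_u size_polyC polyX_eq0 /= addn1 /=.
  by [].
have -> : q * uv_f f = q * var_u R * var_v R - q * (f%:P)%:P by rewrite /uv_f mulrBr mulrA.
rewrite lamB (lam_widen h1) (lam_widen h2).
rewrite big_ord_recl /= /var_v /var_u coefMX /= coef0 mul0r add0r.
have -> : \sum_(i < size q) ((q * ('X)%:P * 'X)`_(bump 0 i))`_(bump 0 i) * f ^+ bump 0 i
   = f * lam q.
  rewrite /lam big_distrr /=; apply: eq_bigr => j _.
  by rewrite /bump /= add1n coefMX /= coefMC coefMX /= exprS; ring.
rewrite big_ord_recr /= -/n.
have -> : ((q * (f%:P)%:P)`_(size q))`_(size q) = 0 by rewrite coefMC (nth_default _ (leqnn _)) mul0r coef0.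
rewrite mul0r addr0 /lam big_distrr /=.
by rewrite -sumrB; apply: big1 => j _; rewrite coefMC coefMC; ring.
Qed.

Lemma lam_piS p q : piS p = piS q -> lam p = lam q.
Proof. by move/piS_eq => [r hr]; apply/eqP; rewrite -subr_eq0 -lamB hr lam_uvf. Qed.

Lemma lam_C (P : {poly R}) : lam (P%:P) = P`_0.
Proof.
rewrite (@lam_widen 1) ?size_polyC ?leq_b1 //.
by rewrite big_ord1 coefC /= expr0 mulr1.
Qed.

Lemma lam_uN N r : rdvd (f ^+ N) (lam (('X^N)%:P * r)).
Proof.
apply: rdvd_sum => j _; rewrite coefCM coefXnM.
case: ltnP => hj; first by rewrite mul0r; apply: rdvd0.
apply: rdvd_mull; exact: rdvd_expn.
Qed.

Lemma Ubound N P : rdvd (U ^+ N) (iota P) -> rdvd (f ^+ N) P`_0.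
Proof.
move=> [s]; have [r ->] := piS_surj s.
have -> : U ^+ N = piS (('X^N)%:P) by rewrite /U -piSX /var_u rmorphXn.
rewrite -piSM => /lam_piS; rewrite lam_C => ->; exact: lam_uN.
Qed.


Lemma Ucancel k (x y : S) : U ^+ k * x = U ^+ k * y -> x = y.
Proof. by move=> h; apply/eqP; rewrite -subr_eq0; apply/eqP; apply: (U_nzdn (n := k)); rewrite mulrBr h subrr. Qed.

Lemma f_nunit : ~ runit f.
Proof. by move/runitP; apply/negP. Qed.

Lemma U_nunit : ~ runit U.
Proof.
move=> hU; have : rdvd U (piS 1) by rewrite piS1.
move/U_dvd; rewrite /e0 rmorph1 => /dvdC_coef /(_ 0%N); rewrite coefC /= => h.
by apply: f_nunit.
Qed.

Lemma kap_unitP c : runit c -> runit (kap c).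
Proof. by move=> [x hx]; exists (kap x); rewrite -kapM -hx kap1. Qed.

Lemma iota_unitP P : runit P -> runit (iota P).
Proof. by move=> [x hx]; exists (iota x); rewrite -iotaM -hx iota1. Qed.

Lemma kap_unit c : runit (kap c) -> runit c.
Proof.
move=> [s hs]; have [N [P hP]] := KL s.
have : iota ('X^N) = iota (c%:P * P) by rewrite iotaM -hP iotaXn iotaX iotaC mulrCA -hs mulr1.
move/iota_inj/(congr1 (fun p : {poly R} => p`_N)); rewrite coefXn eqxx coefCM => h.
by exists P`_N.
Qed.

Lemma kap_dvd c a : rdvd (kap c) (kap a) -> rdvd c a.
Proof.
move=> [s hs]; have [N [P hP]] := KL s.
have : iota (a%:P * 'X^N) = iota (c%:P * P) by rewrite !iotaM -hP iotaXn iotaX !iotaC hs; ring.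
move/iota_inj/(congr1 (fun p : {poly R} => p`_N)); rewrite coefCM coefXn eqxx mulr1 coefCM => h.
by exists P`_N.
Qed.

Lemma kap_eq0 a : kap a = 0 -> a = 0.
Proof. by rewrite -iotaC => /iota_eq0 /eqP; rewrite polyC_eq0 => /eqP. Qed.

Lemma U_dvd_unit c : runit c -> ~ rdvd U (kap c).
Proof. by move=> hc hd; apply: U_nunit; apply: runit_dvd hd; apply: kap_unitP. Qed.

Lemma HU N al (a : S) c : runit c -> (al <= N)%N -> U ^+ N * a = kap c * U ^+ al -> runit a.
Proof.
move=> hc hle h.
have h2 : U ^+ al * (U ^+ (N - al) * a) = U ^+ al * kap c by rewrite mulrA -exprD subnKC // h mulrC.
move/Ucancel: h2; case: (N - al)%N => [|k].
  by rewrite expr0 mul1r => ->; apply: kap_unitP.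
move=> h3; exfalso; apply: (U_dvd_unit hc); rewrite -h3 exprS -mulrA.
by apply: rdvd_mulr; apply: rdvd_refl.
Qed.

Lemma U_irr : rirreducible U.
Proof.
split; [exact: U_neq0 | exact: U_nunit|] => a b hab.
have [N [A hA]] := KL a; have [M [B hB]] := KL b.
have e1 : A * B = 1%:P * 'X^((N + M).+1).
  apply: iota_inj; rewrite iotaM -hA -hB iotaM iota1 mul1r iotaXn iotaX hab.
  rewrite exprS exprD; ring.
have [c [al [c0 _ hA']]] := DM (oner_neq0 _) e1.
have [c' [be [c'0 _ hB']]] := DM (oner_neq0 _) (etrans (mulrC B A) e1).
move: e1; rewrite hA' hB' mulrACA -polyCM -exprD => e1.
have := congr1 (fun p : {poly R} => p`_(al + be)%N) e1; rewrite /= coefCM coefXn eqxx mulr1 coefCM coefXn mul1r.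
have hcc : c * c' != 0 by rewrite mulf_neq0.
case: eqP => [hn|_] hcc1; last by move: hcc; rewrite hcc1 eqxx.
have cu : runit c by exists c'.
have c'u : runit c' by exists c; rewrite mulrC.
have [hle|hlt] := leqP al N.
  left; apply: (HU cu hle); by rewrite hA hA' iotaM iotaC iotaXn iotaX.
right; apply: (HU c'u (N := M) (al := be)); last by rewrite hB hB' iotaM iotaC iotaXn iotaX.
lia.
Qed.

Lemma V_nunit : ~ runit V.
Proof.
move=> [s hs]; have [N [P hP]] := KL s.
have : iota ('X^(N.+1)) = iota (f%:P * P).
  rewrite iotaM -hP iotaXn iotaX iotaC -UV exprS -[X in X = _]mulr1 hs; ring.
move/iota_inj/(congr1 (fun p : {poly R} => p`_N.+1)); rewrite coefXn eqxx coefCM => h.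
by apply: f_nunit; exists P`_N.+1.
Qed.

Lemma DC (s : S) a : a != 0 -> rdvd s (kap a) ->
  exists c k, c != 0 /\ (s = kap c * U ^+ k \/ s = kap c * V ^+ k).
Proof.
move=> a0 [t ht].
have [N [S1 hS]] := KL s; have [M [T1 hT]] := KL t.
have e1 : S1 * T1 = a%:P * 'X^(N + M).
  apply: iota_inj; rewrite !iotaM -hS -hT iotaC iotaXn iotaX ht exprD; ring.
have [c [al [c0 _ hS1]]] := DM a0 e1.
have e2 : U ^+ N * s = kap c * U ^+ al by rewrite hS hS1 iotaM iotaC iotaXn iotaX.
have [hle|hlt] := leqP N al.
  exists c, (al - N)%N; split => //; left; apply: (@Ucancel N).
  by rewrite e2 mulrCA -exprD subnKC.
set k := (N - al)%N.
have e3 : U ^+ k * s = kap c.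
  apply: (@Ucancel al); rewrite mulrA -exprD subnKC ?(ltnW hlt) // e2 mulrC //.
have [c' hc'] : rdvd (f ^+ k) c.
  have := @Ubound k (c%:P); rewrite coefC /=; apply.
  by rewrite iotaC -e3; apply: rdvd_mulr; apply: rdvd_refl.
exists c', k; split; first by apply: contraNneq c0 => h; rewrite hc' h mulr0.
right; apply: (@Ucancel k); rewrite e3 hc' kapM kapX -UV exprMn; ring.
Qed.


Lemma U_dvd_kap b : rdvd U (kap b) -> rdvd f b.
Proof.
move/U_dvd; rewrite e0C hornerC => /dvdC_coef /(_ 0%N); by rewrite !coefC.
Qed.

Lemma kap_prime c : rprime (kap c) -> rprime c.
Proof.
move=> [k0 ku kp]; split.
- by apply: contraNneq k0 => ->; rewrite -iotaC iota0.
- by move/kap_unitP.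
- move=> x y [z hz]; have : rdvd (kap c) (kap x * kap y).
    by rewrite -kapM hz kapM; apply: rdvd_mulr; apply: rdvd_refl.
  by move/kp => [] /kap_dvd; [left|right].
Qed.

Lemma prime_pow_shape (W : S) c k : ~ runit W -> rprime (kap c * W ^+ k) ->
  k = 0%N \/ (k = 1%N /\ runit c).
Proof.
move=> Wu hp; case: k hp => [|j] hp; first by left.
have [_ _ irr] := rprime_irr S_domain hp.
case: (irr (kap c * W ^+ j) W) => [|h|//]; first by rewrite exprSr mulrA.
right; split; last by apply: kap_unit; apply: runitMl h.
case: j h {hp irr} => // j /runitMr; rewrite exprS => /runitMl //.
Qed.

Lemma unit_shape (a : R) (E : S) : a != 0 -> runit E -> exists2 c : R, runit c & E = kap c.
Proof.
move=> a0 hE; have [c [k [c0 [hc|hc]]]] := DC a0 (@rdvd_unit _ E (kap a) hE).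
  case: k hc => [|k] hc; first by exists c; [apply: kap_unit; rewrite -(mulr1 (kap c)) -(expr0 U) -hc|rewrite hc expr0 mulr1].
  exfalso; apply: U_nunit; apply: runit_dvd hE _; rewrite hc exprS mulrCA; apply: rdvd_mulr; apply: rdvd_refl.
case: k hc => [|k] hc; first by exists c; [apply: kap_unit; rewrite -(mulr1 (kap c)) -(expr0 V) -hc|rewrite hc expr0 mulr1].
exfalso; apply: V_nunit; apply: runit_dvd hE _; rewrite hc exprS mulrCA; apply: rdvd_mulr; apply: rdvd_refl.
Qed.

Lemma CL a (ss : seq S) : a != 0 -> (forall s, s \in ss -> rprime s /\ rdvd s (kap a)) ->
  exists e (cs : seq R) m m', [/\ runit e, (forall x, x \in cs -> rprime x) &
    \prod_(s <- ss) s = kap (e * \prod_(x <- cs) x) * U ^+ m * V ^+ m'].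
Proof.
move=> a0; elim: ss => [|s ss IH] hss.
  exists 1, [::], 0%N, 0%N; split; [exact: runit1|by []|].
  by rewrite !big_nil !expr0 !mulr1 kap1.
have hss' : forall x, x \in ss -> rprime x /\ rdvd x (kap a).
  by move=> x hx; apply: hss; rewrite inE hx orbT.
have [e [cs [m [m' [he hcs hp]]]]] := IH hss'.
have [sp sd] : rprime s /\ rdvd s (kap a) by apply: hss; rewrite inE eqxx.
have [c [k [c0 [hc|hc]]]] := DC a0 sd; rewrite big_cons hp.
- have sp' : rprime (kap c * U ^+ k) by rewrite -hc.
  have [k0|[k1 cu]] := prime_pow_shape U_nunit sp'.
    exists e, (c :: cs), m, m'; split => //.
      move=> x; rewrite inE => /orP [/eqP ->|]; last by apply: hcs.
      by apply: kap_prime; move: sp; rewrite hc k0 expr0 mulr1.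
    by rewrite hc k0 expr0 mulr1 big_cons kapM kapM kapM; ring.
  exists (e * c), cs, m.+1, m'; split => //; first exact: runitM.
  by rewrite hc k1 expr1 !kapM exprS; ring.
- have sp' : rprime (kap c * V ^+ k) by rewrite -hc.
  have [k0|[k1 cu]] := prime_pow_shape V_nunit sp'.
    exists e, (c :: cs), m, m'; split => //.
      move=> x; rewrite inE => /orP [/eqP ->|]; last by apply: hcs.
      by apply: kap_prime; move: sp; rewrite hc k0 expr0 mulr1.
    by rewrite hc k0 expr0 mulr1 big_cons kapM kapM kapM; ring.
  exists (e * c), cs, m, m'.+1; split => //; first exact: runitM.
  by rewrite hc k1 expr1 !kapM exprS; ring.
Qed.

Lemma prod_nseq (A : comNzRingType) (x : A) n : \prod_(y <- nseq n x) y = x ^+ n.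
Proof. by elim: n => [|n IH]; rewrite ?big_nil ?expr0 // big_cons IH exprS. Qed.

Lemma forward : UFD S -> UFD R /\ rprime f.
Proof.
move=> hS.
have Up : rprime U := UFD_irr_prime hS U_irr.
have fp : rprime f.
  split => //; first exact: f_nunit.
  move=> b c [d hd]; have : rdvd U (kap b * kap c).
    by rewrite -kapM hd kapM -UV -mulrA; apply: rdvd_mulr; apply: rdvd_refl.
  case: Up => _ _ Upp; move/Upp => [h|h]; [left|right]; exact: U_dvd_kap.
split => //; apply: PF_UFD; first exact: idomain_domain.
move=> a a0.
have ka0 : kap a != 0 by apply: contraNneq a0 => /kap_eq0 ->.
have [E [ss [hE hss ea]]] := UFD_PF hS ka0.
have [e0' he0' hE'] := unit_shape a0 hE.
have hss2 : forall s, s \in ss -> rprime s /\ rdvd s (kap a).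
  by move=> s hs; split; [apply: hss | rewrite ea; apply: rdvd_mull; apply: rdvd_prod].
have [e [cs [m [m' [he hcs hp]]]]] := CL a0 hss2.
set C := e0' * (e * \prod_(x <- cs) x).
have e1 : kap a = kap C * U ^+ m * V ^+ m' by rewrite ea hp hE' /C kapM; ring.
have e2 : iota (a%:P * 'X^m') = iota ((C * f ^+ m')%:P * 'X^m).
  rewrite !iotaM !iotaC !iotaXn iotaX e1 kapM kapX -UV exprMn; ring.
move/iota_inj/(congr1 (fun p : {poly R} => p`_m')): e2; rewrite !coefCM !coefXn eqxx mulr1.
have [hm|hm] := eqVneq m' m; last by rewrite mulr0 => /eqP; rewrite (negbTE a0).
rewrite hm mulr1 => ha.
exists (e0' * e), (cs ++ nseq m f); split.
- exact: runitM.
- move=> x; rewrite mem_cat => /orP [/hcs //|]; by rewrite mem_nseq => /andP [_ /eqP ->].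
- by rewrite ha /C big_cat /= prod_nseq; ring.
Qed.


Section Backward.
Hypothesis RPF : PF R.
Hypothesis hfp : rprime f.

Lemma U_prime : rprime U.
Proof.
split; [exact: U_neq0 | exact: U_nunit |] => a b.
have [p ->] := piS_surj a; have [q ->] := piS_surj b.
rewrite -piSM => /U_dvd; rewrite e0M => h.
by case: (primeC hfp) => _ _ /(_ _ _ h) [] /U_dvd; [left|right].
Qed.

Lemma WA N j (a w T : S) : ~ rdvd U w -> U ^+ N * a = U ^+ j * (w * T) -> rdvd w a.
Proof.
move=> hw h.
have [hle|hlt] := leqP N j.
  exists (U ^+ (j - N) * T); apply: (@Ucancel N).
  by rewrite h -{1}(subnKC hle) exprD; ring.
have h2 : U ^+ (N - j) * a = w * T.
  by apply: (@Ucancel j); rewrite -h -{2}(subnKC (ltnW hlt)) exprD; ring.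
have : rdvd (U ^+ (N - j)) (w * T) by rewrite -h2; apply: rdvd_mulr; apply: rdvd_refl.
move/(prime_pow_dvd_coprime S_domain U_prime hw) => [T' hT'].
exists T'; apply: (@Ucancel (N - j)); by rewrite h2 hT' mulrCA.
Qed.

Lemma prime_dvd_Xn (q : {poly R}) n : rprime q -> rdvd q ('X ^+ n) -> rdvd q 'X.
Proof.
move=> hq; elim: n => [|n IH]; first by rewrite expr0 => h; exfalso; case: hq => _ + _; apply; apply: runit_dvd h; exact: runit1.
by rewrite exprS; case: (hq) => _ _ qp /qp [].
Qed.

Lemma prime_pull (q : {poly R}) : rprime q -> ~ rdvd q 'X ->
  exists j w, [/\ iota q = U ^+ j * w, ~ rdvd U w &
    forall a b, rdvd w (a * b) -> rdvd w a \/ rdvd w b].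
Proof.
move=> hq hqX.
have q00 : q`_0 != 0.
  apply/eqP => q00; apply: hqX.
  have hq' : q = 'X * drop_poly 1 q.
    apply/polyP => i; rewrite coefXM coef_drop_poly; case: i => [|i] //=; by rewrite addn1.
  have [_ _ qi] := rprime_irr (@idomain_domain _) hq.
  case: (qi _ _ hq') => [Xu|[d hd]]; first by have [_ + _] := X_irr R; case.
  by exists d; rewrite {1}hq' -mulrA -hd mulr1.
have [N hN] := PF_bound (@idomain_domain _) RPF hf0 f_nunit q00.
have exn : exists k, `[< ~ rdvd (U ^+ k) (iota q) >].
  by exists N; apply/asboolP => /Ubound.
case: (ex_minnP exn) => j0 /asboolP hj0 mj0.
have j0pos : (0 < j0)%N.
  by case: j0 hj0 {mj0} => // /(_ (rdvd_unit _ _)) []; rewrite expr0; exact: runit1.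
have [w hw] : rdvd (U ^+ j0.-1) (iota q).
  apply: contrapT => h; have := mj0 j0.-1 (introT (asboolP _) h); by rewrite leqNgt prednK ?leqnn.
have hUw : ~ rdvd U w.
  move=> [w' hw']; apply: hj0; exists w'; rewrite hw hw' mulrA -exprSr prednK //.
exists j0.-1, w; split => //.
move=> a b [z hz].
have [N1 [A hA]] := KL a; have [N2 [B hB]] := KL b; have [N3 [Z hZ]] := KL z.
set j := j0.-1 in hw *.
have e1 : 'X ^+ (N3 + j) * (A * B) = 'X ^+ (N1 + N2) * (q * Z).
  apply: iota_inj; rewrite !iotaM !iotaXn iotaX -hA -hB -hZ hw.
  rewrite !exprD; have -> : U ^+ N1 * a * (U ^+ N2 * b) = U ^+ N1 * U ^+ N2 * (a * b) by ring.
  by rewrite hz; ring.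
have : rdvd q ('X ^+ (N3 + j) * (A * B)) by rewrite e1 mulrCA; apply: rdvd_mulr; apply: rdvd_refl.
case: (hq) => _ _ qp; move/qp => [/(prime_dvd_Xn hq) //|/qp [[A' hA']|[B' hB']]].
  left; apply: (@WA N1 j a w (iota A')) => //.
  by rewrite hA hA' iotaM hw mulrA.
right; apply: (@WA N2 j b w (iota B')) => //.
by rewrite hB hB' iotaM hw mulrA.
Qed.


Lemma LQ (qs : seq {poly R}) : (forall q : {poly R}, q \in qs -> rprime q) ->
  exists E k (ws : seq S), [/\ runit E, (forall w, w \in ws -> rprime w /\ ~ rdvd U w) &
    iota (\prod_(q <- qs) q) = E * U ^+ k * \prod_(w <- ws) w].
Proof.
elim: qs => [|q qs IH] hqs; rewrite -/(T).
  exists 1, 0%N, [::]; split; [exact: runit1|by []|].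
  by rewrite !big_nil iota1 expr0 !mulr1.
have hqs' : forall x, x \in qs -> rprime x by move=> x hx; apply: hqs; rewrite inE hx orbT.
have hq : rprime q by apply: hqs; rewrite inE eqxx.
have [E [k [ws [hE hws he]]]] := IH hqs'.
rewrite big_cons iotaM he.
have [[r hr]|nqX] := pselect (rdvd q 'X).
  have [_ _ Xi] := X_irr R.
  case: (Xi _ _ hr) => [qu|ru]; first by exfalso; case: hq.
  have [r' hr'] := ru.
  have hq' : q = 'X * r' by rewrite -[q]mulr1 hr' mulrA -hr.
  exists (E * iota r'), k.+1, ws; split => //.
    by apply: runitM => //; apply: iota_unitP; exists r; rewrite hr' mulrC.
  by rewrite hq' iotaM iotaX exprS; ring.
have [j [w [hw hUw hwp]]] := prime_pull hq nqX.
have w0 : w != 0.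
  apply/eqP => w0; have : iota q = 0 by rewrite hw w0 mulr0.
  by move/iota_eq0 => q0; case: hq; rewrite q0 eqxx.
have [wu|wnu] := pselect (runit w).
  exists (E * w), (k + j)%N, ws; split => //; first exact: runitM.
  by rewrite hw exprD; ring.
exists E, (k + j)%N, (w :: ws); split => //.
  by move=> x; rewrite inE => /orP [/eqP ->|/hws //]; split.
by rewrite hw big_cons exprD; ring.
Qed.

Lemma PF_S : PF S.
Proof.
move=> s s0.
have [m [P hP]] := KL s.
have P0 : P != 0.
  apply/eqP => P0; move: hP; rewrite P0 iota0 => /U_nzdn h; by rewrite h eqxx in s0.
have [e [qs [he hqs eP]]] := polyPF RPF P0.
have [E [k [ws [hE hws hL]]]] := LQ hqs.
have e1 : U ^+ m * s = (iota e * E) * U ^+ k * \prod_(w <- ws) w.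
  by rewrite hP eP iotaM hL; ring.
have hws' : forall w, w \in ws -> rprime w by move=> w /hws [].
have ieE : runit (iota e * E) by apply: runitM => //; apply: iota_unitP.
have [hle|hlt] := leqP m k.
  exists (iota e * E), (nseq (k - m) U ++ ws); split => //.
    move=> x; rewrite mem_cat => /orP [|/hws' //]; rewrite mem_nseq => /andP [_ /eqP ->].
    exact: U_prime.
  apply: (@Ucancel m); rewrite e1 big_cat /= prod_nseq -{1}(subnKC hle) exprD; ring.
exfalso.
have e2 : U ^+ (m - k) * s = (iota e * E) * \prod_(w <- ws) w.
  apply: (@Ucancel k); rewrite mulrA -exprD subnKC ?(ltnW hlt) // e1; ring.
have : rdvd U (\prod_(w <- ws) w).
  apply: (rdvd_mul_unit ieE); rewrite -e2.
  case: (m - k)%N (subn_gt0 k m) => [|n _]; first by rewrite hlt.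
  by rewrite exprS -mulrA; apply: rdvd_mulr; apply: rdvd_refl.
move/(rprime_dvd_prod U_prime) => [w hw hUw].
by have [_] := hws w hw.
Qed.

End Backward.
End SRing.

End Dev.

Unset Implicit Arguments. Set Strict Implicit. Set Printing Implicit Defensive.

Theorem theorem2p1 (R : idomainType) (f : R) (hf0 : f != 0)
    (hfu : f \isn't a GRing.unit) :
  UFD (S_uv hfu) <-> UFD R /\ rprime f.
Proof.
split; first exact: (@Dev.forward R f hf0 hfu).
move=> [hR hfp].
exact: Dev.PF_UFD (@Dev.S_domain R f hf0 hfu) (@Dev.PF_S R f hf0 hfu (Dev.UFD_PF hR) hfp).
Qed.
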